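(* Let $A=[a_{ij}]$ be an $n\times n$ real matrix and suppose that $Av=\lambda v$ for some real number $\lambda$ and some real vector $v=(v_1,\dots,v_n)^T$ with $v_i\neq 0$ for all $i$. Let $S=\mathrm{diag}(v)$ and $B=S^{-1}AS$. If $\lambda_2$ is an eigenvalue of $A$ different from $\lambda$, then $\lambda_2$ lies in the Gershgorin region of the second type of $B^T$.
   Context: For a real $n\times n$ matrix $M=[m_{ij}]$ and an index $j$, let $y_1\ge y_2\ge\dots\ge y_n$ be the non-increasing rearrangement of the $n$ numbers $m_{1j},\dots,m_{j-1,j},0,m_{j+1,j},\dots,m_{nj}$ (the $j$-th column of $M$ with its diagonal entry replaced by $0$). Define $\hat r_j=\sum_{t=1}^{(n-1)/2}y_t-\sum_{t=(n+3)/2}^{n}y_t$ if $n$ is odd, and $\hat r_j=\sum_{t=1}^{n/2}y_t-\sum_{t=n/2+1}^{n}y_t$ if $n$ is even. The Gershgorin disc of the second type of $M^T$ associated with index $j$ is the closed disc $\{z\in\mathbb{C}:|z-m_{jj}|\le \hat r_j\}$, and the Gershgorin region of the second type of $M^T$ is the union of these $n$ discs. *)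

(* Defs.v *)
From HB Require Import structures.
From mathcomp Require Import all_boot all_order all_algebra.
From mathcomp Require Import complex.
Set Implicit Arguments. Unset Strict Implicit. Unset Printing Implicit Defensive.
Import Order.TTheory GRing.Theory Num.Theory.
Local Open Scope ring_scope.

Definition gersh_seq (R : realDomainType) (n : nat) (M : 'M[R]_n) (j : 'I_n)
  : seq R :=
  sort (fun x y : R => y <= x) [seq (if i == j then 0 else M i j) | i <- enum 'I_n].

(* y_t with 1-based index t *)
Definition gersh_y (R : realDomainType) (n : nat) (M : 'M[R]_n) (j : 'I_n)
  (t : nat) : R := nth 0 (gersh_seq M j) t.-1.

Definition gersh_rhat (R : realDomainType) (n : nat) (M : 'M[R]_n) (j : 'I_n) : R :=
  if odd n then
    \sum_(1 <= t < (n - 1)%/2 + 1) gersh_y M j t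
    - \sum_((n + 3)%/2 <= t < n + 1) gersh_y M j t
  else
    \sum_(1 <= t < n%/2 + 1) gersh_y M j t
    - \sum_(n%/2 + 1 <= t < n + 1) gersh_y M j t.

Definition gersh2_disc (R : rcfType) (n : nat) (M : 'M[R]_n) (j : 'I_n) : pred R[i] :=
  fun z => `|z - (M j j)%:C%C| <= (gersh_rhat M j)%:C%C.

(* Gershgorin region of the second type of M^T *)
Definition gersh2_region (R : rcfType) (n : nat) (M : 'M[R]_n) : pred R[i] :=
  fun z => [exists j : 'I_n, gersh2_disc M j z].

(* Main.v *)
Require Import Defs.
From HB Require Import structures.
From mathcomp Require Import all_boot all_order all_algebra.
From mathcomp Require Import complex zify ring lra.
Import Order.TTheory GRing.Theory Num.Theory.
Local Open Scope ring_scope.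
Lemma sorted_sum (R : realDomainType) (s : seq R) n :
  sorted (fun x y : R => y <= x) s -> size s = n ->
  let F t := nth 0 s t in
  let k := n./2 in
  \sum_(t < n) `|F t - F k| =
  (\sum_(0 <= t < k) F t - \sum_(k <= t < n) F t) + (if odd n then F k else 0).
Proof.
move=> ss sz F k.
have tr : transitive (fun x y : R => y <= x) by move=> a b c h1 h2; exact: le_trans h2 h1.
have rf : reflexive (fun x y : R => y <= x) by move=> a; exact: lexx.
have mono : forall a b, (a <= b)%N -> (b < n)%N -> F b <= F a.
  move=> a b ab bn; apply: (sorted_leq_nth tr rf 0 ss); rewrite ?inE ?sz //.
  exact: leq_ltn_trans ab bn.
have kn : (k <= n)%N by rewrite /k; lia.
rewrite -(big_mkord xpredT (fun t => `|F t - F k|)) (big_cat_nat (leq0n k) kn) /=.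
case: (posnP n) => [n0|npos].
  by rewrite /k n0 /= !big_geq // !addr0 subrr.
have kn' : (k < n)%N by rewrite /k; lia.
rewrite (eq_big_nat _ _ (F2 := fun t => F t - F k)); last first.
  move=> t /andP[_ tk]; rewrite ger0_norm // subr_ge0; apply: mono => //; exact: ltnW.
rewrite [X in _ + X = _](eq_big_nat _ _ (F2 := fun t => F k - F t)); last first.
  move=> t /andP[kt tn]; rewrite distrC ger0_norm // subr_ge0; exact: mono.
rewrite !sumrB !sumr_const_nat.
have -> : (n - k = k + odd n)%N by rewrite /k; move: (odd_double_half n); lia.
rewrite subn0 mulrnDr; case: (odd n) => /=; rewrite ?mulr0n; ring.
Qed.

Lemma size_gersh (R : realDomainType) n (M : 'M[R]_n) j : size (gersh_seq M j) = n.
Proof. by rewrite /gersh_seq size_sort size_map size_enum_ord. Qed.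

Lemma rhat_eq (R : realDomainType) n (M : 'M[R]_n) j :
  gersh_rhat M j = \sum_(t < n) `|nth 0 (gersh_seq M j) t - nth 0 (gersh_seq M j) n./2|.
Proof.
rewrite sorted_sum ?size_gersh //; last first.
  apply: sort_sorted => x y; exact: le_total.
set F := nth 0 (gersh_seq M j).
have sh : forall a b, \sum_(a.+1 <= t < b.+1) gersh_y M j t = \sum_(a <= t < b) F t.
  by move=> a b; rewrite big_add1 /=.
rewrite /gersh_rhat; case: ifP => od.
  have -> : ((n - 1) %/ 2 + 1 = n./2.+1)%N by move: (odd_double_half n); rewrite od; lia.
  have -> : ((n + 3) %/ 2 = (n./2.+1).+1)%N by move: (odd_double_half n); rewrite od; lia.
  rewrite (sh 0%N) addn1 sh.
  rewrite (@big_ltn _ _ _ n./2 n); last by move: (odd_double_half n); rewrite od; lia.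
  rewrite /=; ring.
have -> : (n %/ 2 + 1 = n./2.+1)%N by move: (odd_double_half n); rewrite od; lia.
by rewrite (sh 0%N) addn1 sh addr0.
Qed.

Lemma normC_real (R : rcfType) (r : R) : `|r%:C%C| = (`|r|)%:C%C.
Proof. by rewrite normc_def /= (expr2 0) mulr0 addr0 sqrtr_sqr. Qed.

Theorem theorem3 (R : rcfType) (n : nat) (A : 'M[R]_n) (lambda : R) (v : 'cV[R]_n)
  (hv : A *m v = lambda *: v) (hnz : forall i : 'I_n, v i 0 != 0)
  (lambda2 : R[i])
  (heig : eigenvalue (map_mx (fun x : R => x%:C%C) A) lambda2)
  (hne : lambda2 != lambda%:C%C) :
  let S := diag_mx (v^T) in
  let B := invmx S *m A *m S in
  gersh2_region B lambda2.
Proof.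
rewrite /=; set S := diag_mx (v^T); set B := invmx S *m A *m S.
have Su : S \in unitmx.
  by rewrite unitmxE det_diag unitfE; apply/prodf_neq0 => i _; rewrite mxE.
have SB : S *m B = A *m S by rewrite /B !mulmxA mulmxV // mul1mx.
have Bij i j : B i j = A i j * v j 0 / v i 0.
  have := congr1 (fun M : 'M[R]_n => M i j) SB; rewrite /S mul_diag_mx mul_mx_diag !mxE => e.
  apply: (mulfI (hnz i)); rewrite e; field; exact: hnz.
case/eigenvalueP: heig => u hu unz.
have hcol j : \sum_i u 0 i * (A i j)%:C%C = lambda2 * u 0 j.
  have := congr1 (fun M : 'rV[R[i]]_n => M 0 j) hu; rewrite !mxE => <-.
  by apply: eq_bigr => i _; rewrite mxE.
have hrow i : \sum_j A i j * v j 0 = lambda * v i 0.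
  by have := congr1 (fun M : 'cV[R]_n => M i 0) hv; rewrite !mxE.
pose x i := u 0 i * (v i 0)%:C%C.
have sumx : \sum_i x i = 0.
  have e : lambda2 * \sum_i x i = lambda%:C%C * \sum_i x i.
    rewrite mulr_sumr.
    transitivity (\sum_j (\sum_i u 0 i * (A i j)%:C%C) * (v j 0)%:C%C).
      by apply: eq_bigr => j _; rewrite hcol /x mulrA.
    rewrite (eq_bigr (fun j => \sum_i u 0 i * (A i j)%:C%C * (v j 0)%:C%C)); last first.
      by move=> j _; rewrite mulr_suml.
    rewrite exchange_big /= mulr_sumr; apply: eq_bigr => i _.
    rewrite (eq_bigr (fun j => u 0 i * (A i j * v j 0)%:C%C)); last first.
      by move=> j _; rewrite rmorphM mulrA.
    rewrite -mulr_sumr -rmorph_sum hrow rmorphM /x; ring.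
  apply/eqP; move/eqP: e; rewrite -subr_eq0 -mulrBl mulf_eq0 subr_eq0 (negbTE hne) /=.
  done.
have colx j : \sum_i x i * (B i j)%:C%C = lambda2 * x j.
  rewrite (eq_bigr (fun i => u 0 i * (A i j)%:C%C * (v j 0)%:C%C)); last first.
    move=> i _; rewrite /x Bij -!mulrA -!rmorphM; congr (_ * _%:C%C).
    field; exact: hnz.
  by rewrite -mulr_suml hcol /x mulrA.
have [i0 hi0] : exists i0, u 0 i0 != 0.
  case: (pickP (fun i => u 0 i != 0)) => [i0 h|h]; first by exists i0.
  move: unz; case/negP; apply/eqP/rowP => i; rewrite !mxE.
  by move: (h i) => /= /negbFE /eqP.
have hx0 : x i0 != 0 by rewrite /x mulf_neq0 // fmorph_eq0 hnz.
pose N i := Num.sqrt (complex.Re (x i) ^+ 2 + complex.Im (x i) ^+ 2).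
have normx i : `|x i| = (N i)%:C%C by rewrite normc_def.
case: (@arg_maxP _ _ _ i0 xpredT N isT) => j _ hj.
have hj' i : N i <= N j := hj i isT.
have Nj0 : 0 < N j.
  apply: lt_le_trans (hj' i0); by rewrite -ltcR -normx normr_gt0.
apply/existsP; exists j; rewrite /gersh2_disc.
pose c i := if i == j then 0 else B i j.
pose g := nth 0 (gersh_seq B j) n./2.
have key : (lambda2 - (B j j)%:C%C) * x j = \sum_i x i * (c i - g)%:C%C.
  rewrite (eq_bigr (fun i => x i * (c i)%:C%C - g%:C%C * x i)); last first.
    move=> i _; rewrite rmorphB mulrBr. congr (_ - _); exact: mulrC.
  rewrite sumrB -mulr_sumr sumx mulr0 subr0 mulrBl -colx.
  rewrite (bigD1 j) //= [X in _ = X](bigD1 j) //= /c eqxx mulr0 add0r. rewrite [(B j j)%:C%C * x j]mulrC addrAC subrr add0r.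
  by apply: eq_bigr => i /negbTE ->.
have pe : perm_eq (gersh_seq B j) (map c (enum 'I_n)) by rewrite /gersh_seq perm_sort.
have sumeq : \sum_i `|c i - g| = gersh_rhat B j.
  rewrite rhat_eq -/g -big_enum /= -(big_map c xpredT (fun y => `|y - g|)).
  by rewrite -(perm_big _ pe) (big_nth 0) size_gersh big_mkord.
have ineq : `|lambda2 - (B j j)%:C%C| * (N j)%:C%C <= (gersh_rhat B j)%:C%C * (N j)%:C%C.
  rewrite -normx -normrM key -sumeq rmorph_sum mulr_suml.
  apply: le_trans (ler_norm_sum _ _ _) _.
  apply: ler_sum => i _; rewrite normrM normx normC_real mulrC.
  rewrite normx; apply: ler_wpM2l; [by rewrite ler0c | by rewrite lecR].
by move: ineq; rewrite ler_pM2r // ltcR.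
Qed.
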